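(* Let $n\ge1$, $m\ge0$ be integers and let non-negative integers $r_0,\dots,r_n$ satisfy $r_n=0$, $r_{n-1}=m$, $r_\ell\ge 2r_{\ell+1}$ for $\ell=n-2,\dots,0$, and let $k\ge 2r_0+1$. Let $T$ be an $n$-simplex. Then for $\ell=1,\dots,n-1$ and every $f\in\Delta_\ell(T)$, $$D(f,r_\ell)\setminus\Big[\bigcup_{i=0}^{\ell-1}\bigcup_{e\in\Delta_i(f)}D(e,r_i)\Big]=D(f,r_\ell)\setminus\Big[\bigcup_{i=0}^{\ell-1}\bigcup_{e\in\Delta_i(T)}D(e,r_i)\Big].$$
   Context: $\mathbb N$ includes $0$; $\mathbb T^n_k=\{\alpha\in\mathbb N^{n+1}:\sum_i\alpha_i=k\}$. $\Delta_i(T)$ (resp. $\Delta_i(f)$) is the set of $i$-dimensional faces of $T$ (resp. of $f$); a face $e$ is identified with its vertex index set $e\subseteq\{0,\dots,n\}$ and $e^*=\{0,\dots,n\}\setminus e$. $D(e,r)=\{\alpha\in\mathbb T^n_k:\sum_{i\in e^*}\alpha_i\le r\}$. *)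

(* Defs.v *)
From mathcomp Require Import all_boot all_order.
Set Implicit Arguments. Unset Strict Implicit. Unset Printing Implicit Defensive.

(* Multi-indices alpha in N^{n+1}, indexed by the vertices 'I_n.+1 of T. *)
Definition mindex (n : nat) := {ffun 'I_n.+1 -> nat}.

Definition in_Tnk (n k : nat) (a : mindex n) : bool := \sum_(i < n.+1) a i == k.

(* Faces of T are identified with their vertex index sets; an i-dimensional
   face has i+1 vertices.  Delta_i(f) = i-dimensional faces of the face f. *)
Definition faces (n i : nat) (f : {set 'I_n.+1}) : {set {set 'I_n.+1}} :=
  [set e : {set 'I_n.+1} | (e \subset f) && (#|e| == i.+1)].

Definition facesT (n i : nat) : {set {set 'I_n.+1}} := faces i [set: 'I_n.+1].

Definition D (n k : nat) (e : {set 'I_n.+1}) (r : nat) (a : mindex n) : bool :=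
  in_Tnk k a && (\sum_(i in ~: e) a i <= r).

(* Main.v *)
Require Import Defs.
From mathcomp Require Import all_boot all_order.
From mathcomp Require Import zify.

Lemma sum_union_le (T : finType) (A B : {set T}) (F : T -> nat) :
  \sum_(x in A :|: B) F x <= \sum_(x in A) F x + \sum_(x in B) F x.
Proof.
rewrite (big_mkcond (fun x => x \in A :|: B)) (big_mkcond (fun x => x \in A))
  (big_mkcond (fun x => x \in B)) -big_split /=.
apply: leq_sum => x _; rewrite in_setU.
by case: (x \in A); case: (x \in B) => //=; rewrite ?leq_addr ?addn0.
Qed.

Theorem mainTheorem6 (n m k : nat) (r : nat -> nat) :
  1 <= n ->
  r n = 0 -> r n.-1 = m ->
  (forall l, l.+2 <= n -> 2 * r l.+1 <= r l) ->
  (2 * r 0).+1 <= k ->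
  forall l, 1 <= l -> l <= n.-1 ->
  forall f : {set 'I_n.+1}, f \in facesT n l ->
  forall a : mindex n,
    (D k f (r l) a &&
       ~~ [exists i : 'I_l, [exists e in faces i f, D k e (r i) a]])
    =
    (D k f (r l) a &&
       ~~ [exists i : 'I_l, [exists e in facesT n i, D k e (r i) a]]).
Proof.
move=> n1 rn _ hr hk l l1 ln f fF a.
have step : forall x, x < n -> r x.+1 <= r x.
  move=> x xn; case: (ltnP x.+1 n) => h.
    by have := hr x h; lia.
  have E : x.+1 = n by lia.
  by rewrite E rn.
have mono : forall x y, x <= y -> y <= n -> r y <= r x.
  move=> x y xy; elim: y xy => [|y IH] xy yn.
    have -> : x = 0 by lia.
    by [].
  case: (ltnP x y.+1) => h.
    apply: leq_trans (step y _) (IH _ _); lia.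
  have -> : x = y.+1 by lia.
  by [].
case Df: (D k f (r l) a) => //=; congr (~~ _).
apply/idP/idP.
  case/existsP=> i /existsP [e /andP [ef De]]; apply/existsP; exists i.
  apply/existsP; exists e; rewrite De andbT.
  by move: ef; rewrite /facesT /faces !inE subsetT => /andP [_ ->].
case/existsP=> i /existsP [e /andP [eT De]].
move: eT; rewrite /facesT /faces inE subsetT /= => /eqP ce.
case ef: (e \subset f).
  apply/existsP; exists i; apply/existsP; exists e.
  by rewrite De /faces inE ef ce eqxx.
move: Df De; rewrite /D => /andP [Tk sf] /andP [_ se].
have il : i < l := ltn_ord i.
have sef : \sum_(x in ~: (e :&: f)) a x <= r i + r l.
  rewrite setCI. exact: (leq_trans (sum_union_le _ (~: e) (~: f) a) (leq_add se sf)).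
have ri0 : r i <= r 0 by apply: mono; lia.
have rli : r l <= r i by apply: mono; lia.
have ne : e :&: f != set0.
  apply/negP => /eqP E; move: sef; rewrite E setC0.
  move: Tk; rewrite /in_Tnk => /eqP Tk.
  have -> : \sum_(x in [set: 'I_n.+1]) a x = \sum_(x < n.+1) a x.
    by apply: eq_bigl => x; rewrite in_setT.
  rewrite Tk; lia.
have cpos : 0 < #|e :&: f| by rewrite card_gt0.
have clt : #|e :&: f| < i.+1.
  by rewrite -ce; apply: proper_card; apply: properIl; rewrite ef.
set j := #|e :&: f|.-1.
have jl : j < l by rewrite /j; lia.
apply/existsP; exists (Ordinal jl); apply/existsP; exists (e :&: f).
rewrite /faces inE subsetIr /= /j prednK // eqxx /= /D Tk /=.
apply: leq_trans sef _; change (r i + r l <= r j).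
have h1 : 2 * r j.+1 <= r j by apply: hr; rewrite /j; lia.
have h2 : r i <= r j.+1 by apply: mono; rewrite /j; lia.
lia.
Qed.
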